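(* Let $R$ be a commutative ring with unit and let $G$ be a group with an upper central series $1=G_0\subset G_1\subset\cdots\subset G_n=G$ (so $G_i/G_{i-1}=Z(G/G_{i-1})$). If $G$ is $R$-torsion-free, then each factor group $G_i/G_{i-1}$, $i=1,\dots,n$, is $R$-torsion-free.
   Context: A group $G$ is $R$-torsion-free if for every finite subgroup $H\le G$, $|H|\cdot 1_R$ is invertible in $R$; equivalently, for every prime $p$ such that $G$ has a non-identity element $g$ with $g^p=1$, $p\cdot 1_R$ is invertible in $R$. *)

(* Defs.v *)
From mathcomp Require Import all_boot all_algebra.
Set Implicit Arguments. Unset Strict Implicit. Unset Printing Implicit Defensive.
Import GRing.Theory.

Record AbsGroup := {
  gcar :> Type;
  gmul : gcar -> gcar -> gcar;
  ginv : gcar -> gcar;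
  gone : gcar;
  gmulA : forall x y z, gmul x (gmul y z) = gmul (gmul x y) z;
  gmul1 : forall x, gmul gone x = x;
  gmulV : forall x, gmul (ginv x) x = gone
}.

Fixpoint gexp (G : AbsGroup) (g : G) (n : nat) : G :=
  match n with 0 => gone G | S k => gmul g (gexp g k) end.

Definition gcomm (G : AbsGroup) (x y : G) : G :=
  gmul (gmul (ginv x) (ginv y)) (gmul x y).

(* Upper central series, as subgroups of G:
   G_0 = 1, and G_(i+1) is the preimage of Z(G/G_i), i.e.
   G_(i+1) = { x | forall y, [x,y] \in G_i }. *)
Fixpoint upper_central (G : AbsGroup) (i : nat) : G -> Prop :=
  match i with
  | 0 => fun x => x = gone G
  | S k => fun x => forall y, upper_central k (gcomm x y)
  end.

Definition ring_invertible (R : comPzRingType) (a : R) : Prop :=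
  exists b : R, (a * b = 1)%R.

Definition R_torsion_free (R : comPzRingType) (G : AbsGroup) : Prop :=
  forall p : nat, prime p ->
    (exists g : G, g <> gone G /\ gexp g p = gone G) ->
    ring_invertible (p%:R : R)%R.

(* The factor group G_i/G_(i-1) is R-torsion-free: for every prime p such that
   G_i/G_(i-1) has a non-identity element of order dividing p, i.e. some
   g in G_i with g notin G_(i-1) and g^p in G_(i-1), p*1_R is invertible. *)
Definition factor_R_torsion_free (R : comPzRingType) (G : AbsGroup) (i : nat) : Prop :=
  forall p : nat, prime p ->
    (exists g : G, @upper_central G i g /\ ~ @upper_central G i.-1 g
                   /\ @upper_central G i.-1 (gexp g p)) ->
    ring_invertible (p%:R : R)%R.

(* Main.v *)
Require Import Defs.
From mathcomp Require Import all_boot all_algebra.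
From Stdlib Require Import Classical.

Section GT.
Variable G : AbsGroup.
Local Notation "x ** y" := (@gmul G x y) (at level 40, left associativity).
Local Notation one := (gone G).
Local Notation inv := (@ginv G).

Lemma mulgV (x : G) : x ** inv x = one.
Proof.
rewrite -[x ** inv x]gmul1 -[in X in X ** _ = _](gmulV (inv x)).
by rewrite -gmulA [inv x ** (x ** inv x)]gmulA gmulV gmul1 gmulV.
Qed.

Lemma mulg1 (x : G) : x ** one = x.
Proof. by rewrite -(gmulV x) gmulA mulgV gmul1. Qed.

Lemma mulKg (x y : G) : inv x ** (x ** y) = y.
Proof. by rewrite gmulA gmulV gmul1. Qed.

Lemma mulKVg (x y : G) : x ** (inv x ** y) = y.
Proof. by rewrite gmulA mulgV gmul1. Qed.

Lemma invinv (x : G) : inv (inv x) = x.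
Proof. by rewrite -[LHS]mulg1 -(gmulV x) gmulA gmulV gmul1. Qed.

Lemma invM (x y : G) : inv (x ** y) = inv y ** inv x.
Proof.
have E : (x ** y) ** (inv y ** inv x) = one by rewrite -gmulA mulKVg mulgV.
by rewrite -[LHS]mulg1 -E gmulA gmulV gmul1.
Qed.

Lemma inv1 : inv one = one.
Proof. by rewrite -[LHS]mulg1 gmulV. Qed.

Ltac gsimpl := repeat (rewrite ?invM ?invinv ?inv1 -?gmulA ?mulKg ?mulKVg ?gmulV ?mulgV ?gmul1 ?mulg1).

Local Notation Z := (@upper_central G).

Definition zprops k := [/\ Z k one, (forall a b, Z k a -> Z k b -> Z k (a ** b)),
  (forall a, Z k a -> Z k (inv a)) & (forall a g, Z k a -> Z k (inv g ** a ** g))].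

Lemma zpropsP k : zprops k.
Proof.
elim: k => [|k [H1 HM HI HC]].
  split => /=.
  - by [].
  - by move=> a b -> ->; rewrite gmul1.
  - by move=> a ->; rewrite inv1.
  - by move=> a g ->; rewrite mulg1 gmulV.
split => /=.
- by move=> y; rewrite /gcomm; gsimpl.
- move=> a b Ha Hb y.
  have -> : gcomm (a ** b) y = (inv b ** gcomm a y ** b) ** gcomm b y.
    by rewrite /gcomm; gsimpl.
  by apply: HM; [apply: HC|].
- move=> a Ha y.
  have -> : gcomm (inv a) y = inv (inv a) ** inv (gcomm a y) ** inv a.
    by rewrite /gcomm; gsimpl.
  by apply: HC; apply: HI.
- move=> a g Ha y.
  have -> : gcomm (inv g ** a ** g) y = inv g ** gcomm a (g ** y ** inv g) ** g.
    by rewrite /gcomm; gsimpl.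
  by apply: HC.
Qed.

Lemma powcomm k (g y : G) : Z k.+1 (gcomm g y) ->
  forall m, exists z, Z k z /\ gcomm (gexp g m) y = gexp (gcomm g y) m ** z.
Proof.
have [H1 HM HI HC] := zpropsP k.
set c := gcomm g y => Hc; elim => [|m [z [Hz E]]].
  exists one; split => //=; rewrite /gcomm; gsimpl; done.
exists (inv (gexp c m) ** gcomm c (gexp g m) ** gexp c m ** z); split.
  by apply: HM => //; apply: HC; apply: Hc.
have -> : gcomm (gexp g m.+1) y =
   (inv (gexp g m) ** c ** gexp g m) ** gcomm (gexp g m) y.
  by rewrite /= /gcomm /c; gsimpl.
rewrite E /= /gcomm; gsimpl; done.
Qed.

Lemma mainlem p : (forall g : G, gexp g p = one -> g = one) ->
  forall k g, Z k.+1 g -> Z k (gexp g p) -> Z k g.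
Proof.
move=> Hnt; elim => [|k IH] g Hg Hp.
  by apply: Hnt.
move=> y; apply: IH; first by apply: Hg.
have [H1 HM HI HC] := zpropsP k.
have [z [Hz E]] := @powcomm k g y (Hg y) p.
have -> : gexp (gcomm g y) p = gcomm (gexp g p) y ** inv z by rewrite E; gsimpl.
by apply: HM; [apply: Hp | apply: HI].
Qed.

End GT.

Theorem lemma3p4 (R : comPzRingType) (G : AbsGroup) (n : nat) :
  (forall x : G, @upper_central G n x) ->
  R_torsion_free R G ->
  forall i : nat, 1 <= i <= n -> factor_R_torsion_free R G i.
Proof.
move=> _ Htf [|k] // _ p pp [g [Hi [Hn Hp]]].
apply: Htf => //; apply: NNPP => Hne; apply: Hn => /=.
apply: (@mainlem G p) => // h Hh.
apply: NNPP => Hh1; apply: Hne; by exists h.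
Qed.
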